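(* Let $G$ be a graph of order $n\geq 3$, and let $u$ and $v$ be non-adjacent vertices of $G$. Then $$C(G+uv)\leq C(G)+\left(1-\frac{2}{n}+\frac{4}{n(n-1)}\right),$$ with equality if and only if $G$ is the complete bipartite graph $K_{2,n-2}$ and $u$ and $v$ are the two vertices of degree $n-2$ in $G$.
   Context: All graphs are finite and simple; $G+uv$ denotes the graph obtained from $G$ by adding the edge $uv$. For a vertex $w$ of a graph $G$, $N_G(w)$ is its neighborhood, $d_G(w)$ its degree, and $m(G[N_G(w)])$ the number of edges of the subgraph induced by $N_G(w)$. The clustering coefficient of $w$ in $G$ is $C_w(G)=m(G[N_G(w)])/\binom{d_G(w)}{2}$ if $d_G(w)\geq 2$, and $C_w(G)=0$ otherwise. The clustering coefficient of $G$ is $C(G)=\frac{1}{n(G)}\sum_{w\in V(G)}C_w(G)$, where $n(G)$ is the order of $G$. *)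

(* Defs.v *)
(* A simple graph on a finite vertex type T is a
   symmetric irreflexive relation e : rel T. *)
From HB Require Import structures.
From mathcomp Require Import all_boot all_order all_algebra.
Set Implicit Arguments. Unset Strict Implicit. Unset Printing Implicit Defensive.
Import Order.TTheory GRing.Theory Num.Theory.

Section Graphs.
Variable T : finType.

Definition add_edge (e : rel T) (u v : T) : rel T :=
  fun x y => [|| e x y, (x == u) && (y == v) | (x == v) && (y == u)].

Definition nbhd (e : rel T) (w : T) : {set T} := [set x | e w x].

Definition deg (e : rel T) (w : T) : nat := #|nbhd e w|.

Definition induced_edges (e : rel T) (S : {set T}) : {set {set T}} :=
  [set P : {set T} | (P \subset S) &&
     [exists x : T, exists y : T, e x y && (P == [set x; y])]].

Definition m_nbhd (e : rel T) (w : T) : nat := #|induced_edges e (nbhd e w)|.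

Definition clust_vertex (e : rel T) (w : T) : rat :=
  if 2 <= deg e w then ((m_nbhd e w)%:R / ('C(deg e w, 2))%:R)%R else 0%R.

Definition clust (e : rel T) : rat :=
  ((\sum_(w : T) clust_vertex e w) / (#|T|)%:R)%R.

Definition complete_bipartite_on (e : rel T) (A : {set T}) : Prop :=
  forall x y : T, e x y = ((x \in A) != (y \in A)).

End Graphs.

(* Main.v *)
Require Import Defs.
From HB Require Import structures.
From mathcomp Require Import all_boot all_order all_algebra.
From mathcomp Require Import zify ring lra.
Import Order.TTheory GRing.Theory Num.Theory.
Set Implicit Arguments. Unset Strict Implicit. Unset Printing Implicit Defensive.

Section Sets.
Variable T : finType.
Variable e : rel T.
Hypothesis e_sym : symmetric e.
Hypothesis e_irr : irreflexive e.

Lemma ie_small (S : {set T}) : #|S| < 2 -> induced_edges e S = set0.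
Proof.
move=> hS; apply/setP => P; rewrite !inE.
apply/negP => /andP [sub /existsP [x /existsP [y /andP [hxy /eqP hP]]]].
have nxy : x != y by apply/eqP => exy; rewrite exy e_irr in hxy.
have := subset_leq_card sub; rewrite hP cards2 nxy; lia.
Qed.

Lemma ie_add w (S : {set T}) : w \notin S ->
  #|induced_edges e (w |: S)| = #|induced_edges e S| + #|S :&: nbhd e w|.
Proof.
move=> wS.
have -> : induced_edges e (w |: S) =
   induced_edges e S :|: [set [set w; x] | x in S :&: nbhd e w].
  apply/setP => P; rewrite !inE; apply/idP/idP.
  - move=> /andP [sub /existsP [x /existsP [y /andP [hxy /eqP hP]]]].
    case wP: (w \in P); last first.
      apply/orP; left; apply/andP; split.
        apply/subsetP => z zP; have := subsetP sub z zP.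
        by rewrite !inE => /orP [/eqP zw|//]; move: wP; rewrite -zw zP.
      by apply/existsP; exists x; apply/existsP; exists y; rewrite hxy hP eqxx.
    apply/orP; right; apply/imsetP.
    move: wP; rewrite hP !inE => /orP [/eqP wx|/eqP wy].
    + exists y.
        have : y \in w |: S by apply: (subsetP sub); rewrite hP !inE eqxx orbT.
        rewrite !inE => /orP [/eqP yw|yS].
          by move: hxy; rewrite -wx yw e_irr.
        by rewrite yS /= wx.
      by rewrite wx.
    + exists x.
        have : x \in w |: S by apply: (subsetP sub); rewrite hP !inE eqxx.
        rewrite !inE => /orP [/eqP xw|xS].
          by move: hxy; rewrite -wy xw e_irr.
        by rewrite xS /= wy e_sym.
      by rewrite wy setUC.
  - move=> /orP [/andP [sub ex]|/imsetP [x]].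
      rewrite ex andbT; apply/subsetP => z zP; rewrite inE (subsetP sub z zP).
      by rewrite orbT.
    rewrite !inE => /andP [xS wx] ->.
    apply/andP; split.
      apply/subsetP => z; rewrite !inE => /orP [->//|/eqP ->].
      by rewrite xS orbT.
    by apply/existsP; exists w; apply/existsP; exists x; rewrite wx eqxx.
rewrite cardsU.
have -> : induced_edges e S :&: [set [set w; x] | x in S :&: nbhd e w] = set0.
  apply/setP => P; rewrite !inE; apply/negP => /andP [/andP [sub _]].
  move=> /imsetP [x _ hP]; have := subsetP sub w.
  by rewrite hP !inE eqxx (negbTE wS) => /(_ isT).
rewrite cards0 subn0 card_in_imset //.
move=> x y; rewrite !inE => /andP [xS _] /andP [yS _] hxy.
have : x \in [set w; y] by rewrite -hxy !inE eqxx orbT.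
rewrite !inE => /orP [/eqP xw|/eqP //].
by rewrite -xw xS in wS.
Qed.

End Sets.

Section Add.
Variable T : finType.
Variable e : rel T.
Hypothesis e_sym : symmetric e.
Hypothesis e_irr : irreflexive e.
Variables u v : T.
Hypothesis huv : u != v.
Hypothesis hnadj : ~~ e u v.
Local Notation e' := (add_edge e u v).

Lemma evu : ~~ e v u. Proof. by rewrite e_sym. Qed.

Lemma ie_same (S : {set T}) : ~~ ((u \in S) && (v \in S)) ->
  induced_edges e' S = induced_edges e S.
Proof.
move=> hS; apply/setP => P; rewrite !inE; case sub: (P \subset S) => //=.
apply/existsP/existsP => [[x /existsP [y /andP [hxy /eqP hP]]]|[x /existsP [y /andP [hxy hP]]]].
  exists x; apply/existsP; exists y; rewrite hP eqxx andbT.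
  move: hxy; rewrite /add_edge => /orP [//|/orP [/andP [/eqP xu /eqP yv]|/andP [/eqP xv /eqP yu]]].
    move: sub hS; rewrite hP xu yv => sub; rewrite !(subsetP sub) // !inE eqxx ?orbT //.
  move: sub hS; rewrite hP xv yu => sub; rewrite !(subsetP sub) // !inE eqxx ?orbT //.
by exists x; apply/existsP; exists y; rewrite hP /add_edge hxy.
Qed.

Lemma ie_both (S : {set T}) : u \in S -> v \in S ->
  #|induced_edges e' S| = (#|induced_edges e S|).+1.
Proof.
move=> uS vS.
have -> : induced_edges e' S = [set u; v] |: induced_edges e S.
  apply/setP => P; rewrite !inE; apply/idP/idP.
    move=> /andP [sub /existsP [x /existsP [y /andP [hxy /eqP hP]]]].
    move: hxy; rewrite /add_edge => /orP [h|/orP [/andP [/eqP xu /eqP yv]|/andP [/eqP xv /eqP yu]]].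
    - by rewrite sub /=; apply/orP; right; apply/existsP; exists x; apply/existsP; exists y; rewrite h hP eqxx.
    - by rewrite hP xu yv eqxx.
    - by rewrite hP xv yu setUC eqxx.
  move=> /orP [/eqP ->|/andP [sub /existsP [x /existsP [y /andP [hxy hP]]]]].
    apply/andP; split.
      by apply/subsetP => z; rewrite !inE => /orP [/eqP ->|/eqP ->].
    by apply/existsP; exists u; apply/existsP; exists v; rewrite /add_edge !eqxx orbT.
  by rewrite sub; apply/existsP; exists x; apply/existsP; exists y; rewrite hP /add_edge hxy.
rewrite cardsU1; suff -> : [set u; v] \notin induced_edges e S by [].
rewrite !inE negb_and; apply/orP; right.
apply/existsP => [[x /existsP [y /andP [hxy /eqP hP]]]].
have hx : x \in [set u; v] by rewrite hP !inE eqxx.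
have hy : y \in [set u; v] by rewrite hP !inE eqxx orbT.
move: hx hy; rewrite !inE => /orP [/eqP ex|/eqP ex] /orP [/eqP ey|/eqP ey];
  move: hxy; rewrite ex ey ?e_irr //.
- by rewrite (negbTE hnadj).
- by rewrite (negbTE evu).
Qed.

Lemma nb_u : nbhd e' u = v |: nbhd e u.
Proof.
apply/setP => x; rewrite !inE /add_edge eqxx (negbTE huv) /= ?andbF ?orbF.
by rewrite orbC.
Qed.

Lemma nb_v : nbhd e' v = u |: nbhd e v.
Proof.
apply/setP => x; rewrite !inE /add_edge eqxx eq_sym (negbTE huv) /= ?andbF ?orbF.
by rewrite orbC.
Qed.

Lemma nb_w w : w != u -> w != v -> nbhd e' w = nbhd e w.
Proof.
move=> wu wv; apply/setP => x; rewrite !inE /add_edge (negbTE wu) (negbTE wv) /=.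
by rewrite orbF.
Qed.

Definition C := nbhd e u :&: nbhd e v.

Lemma deg_u : deg e' u = (deg e u).+1.
Proof. by rewrite /deg nb_u cardsU1 !inE hnadj. Qed.

Lemma deg_v : deg e' v = (deg e v).+1.
Proof. by rewrite /deg nb_v cardsU1 !inE evu. Qed.

Lemma m_u : m_nbhd e' u = m_nbhd e u + #|C|.
Proof.
rewrite /m_nbhd nb_u ie_same; last by rewrite !inE e_irr (negbTE huv).
by rewrite ie_add // !inE hnadj.
Qed.

Lemma m_v : m_nbhd e' v = m_nbhd e v + #|C|.
Proof.
rewrite /m_nbhd nb_v ie_same; last by rewrite !inE e_irr eq_sym (negbTE huv) ?andbF ?orbF.
by rewrite ie_add // ?inE ?evu // /C setIC.
Qed.

Lemma m_w w : w != u -> w != v ->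
  m_nbhd e' w = m_nbhd e w + (w \in C).
Proof.
move=> wu wv; rewrite /m_nbhd nb_w // /C !inE [e u w]e_sym [e v w]e_sym.
case h: (e w u && e w v).
  move: h => /andP [h1 h2].
  by rewrite ie_both ?inE // addn1.
by rewrite ie_same ?addn0 // !inE h.
Qed.

End Add.

Local Open Scope ring_scope.

Lemma bin2S (d : nat) : ('C(d.+1, 2) * 2 = d.+1 * d)%N.
Proof.
elim: d => [//|d IH].
rewrite binS bin1 mulnDl IH; lia.
Qed.

Definition fcv (d m : nat) : rat := if (2 <= d)%N then m%:R / ('C(d, 2))%:R else 0.

Definition Bc (c : nat) : rat := if c == 0%N then 0 else 2 / (c.+1)%:R.

Lemma A1 (d m c : nat) : ((d < 2)%N -> m = 0%N) -> (c <= d)%N ->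
  fcv d.+1 (m + c) - fcv d m <= Bc c.
Proof.
move=> hm hc; rewrite /fcv /Bc.
case: d hm hc => [|d] hm hc.
  by rewrite hm // (_ : c = 0%N) ?subrr //; lia.
case: d hm hc => [|d] hm hc.
  rewrite hm // /= add0n bin2 /= divr1 subr0.
  case: c hc => [|[|//]] _ //=.
have hA : (0 < ('C(d.+2, 2))%:R :> rat).
  by rewrite ltr0n bin_gt0.
have hB : (0 < ('C(d.+3, 2))%:R :> rat).
  by rewrite ltr0n bin_gt0.
have hAB : (('C(d.+2, 2))%:R <= ('C(d.+3, 2))%:R :> rat).
  by rewrite ler_nat leq_bin2l.
rewrite /= natrD mulrDl.
have h1 : m%:R / ('C(d.+3, 2))%:R <= m%:R / ('C(d.+2, 2))%:R :> rat.
  apply: ler_wpM2l; first by rewrite ler0n.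
  by rewrite lef_pV2 ?posrE.
case: ifP => [/eqP c0|cn0].
  rewrite c0 /=; move: h1.
  set a := m%:R / _; set b := m%:R / _; rewrite mul0r; lra.
suff h2 : c%:R / ('C(d.+3, 2))%:R <= 2 / (c.+1)%:R :> rat.
  move: h1 h2; set a := m%:R / _; set b := m%:R / _; set x := c%:R / _; set y := 2 / _; lra.
rewrite ler_pdivrMr // mulrAC ler_pdivlMr ?ltr0n //.
rewrite -!natrM ler_nat [X in (_ <= X)%N]mulnC bin2S.
nia.
Qed.

Definition K (n : nat) : rat := n%:R - 2 + 4 / (n%:R - 1).

Lemma A3 (n c : nat) : (3 <= n)%N -> (c <= n - 2)%N ->
  c%:R + 2 * Bc c <= K n /\ (c%:R + 2 * Bc c = K n -> (c = n - 2)%N).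
Proof.
move=> hn hc; rewrite /Bc /K.
have hy : (3 : rat) <= n%:R by rewrite (ler_nat _ 3).
have hy1 : (n%:R - 1 : rat) != 0 by apply/eqP; lra.
have hKp : 0 < (4 : rat) / (n%:R - 1) by apply: divr_gt0; lra.
case: ifP => [/eqP c0|/eqP c0].
  rewrite c0 mulr0 addr0; split; first lra.
  move=> h; exfalso; lra.
have hx : (1 : rat) <= c%:R by rewrite (ler_nat _ 1); lia.
have hxy : (c%:R : rat) <= n%:R - 2.
  have : (c + 2 <= n)%N by lia.
  by rewrite -(ler_nat rat) natrD; lra.
have hx1 : (c.+1%:R : rat) = c%:R + 1 by rewrite -addn1 natrD.
rewrite hx1.
have hx1' : (c%:R + 1 : rat) != 0 by apply/eqP; lra.
have key : n%:R - 2 + 4 / (n%:R - 1) - (c%:R + 2 * (2 / (c%:R + 1))) =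
   (n%:R - 2 - c%:R) * ((c%:R + 1) * (n%:R - 1) - 4) / ((c%:R + 1) * (n%:R - 1)) :> rat.
  by field; rewrite hy1 hx1'.
have hden : 0 < (c%:R + 1) * (n%:R - 1) :> rat by apply: mulr_gt0; lra.
have hnum : 0 <= (n%:R - 2 - c%:R) * ((c%:R + 1) * (n%:R - 1) - 4) :> rat.
  apply: mulr_ge0; nra.
have hge : 0 <= (n%:R - 2 - c%:R) * ((c%:R + 1) * (n%:R - 1) - 4) / ((c%:R + 1) * (n%:R - 1)) :> rat.
  by apply: divr_ge0 => //; apply: ltW.
split.
  move: key hge; set L := (_ + 2 * _); set R := (_ - 2 + _); set Z := (_ / _); lra.
move=> heq.
have : (n%:R - 2 - c%:R) * ((c%:R + 1) * (n%:R - 1) - 4) = 0 :> rat.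
  move: key; rewrite heq subrr => /esym /eqP.
  by rewrite mulf_eq0 invr_eq0 (negbTE (lt0r_neq0 hden)) orbF => /eqP.
move/eqP; rewrite mulf_eq0 => /orP [/eqP h|/eqP h].
  apply/eqP; rewrite -(eqr_nat rat) natrB; last lia.
  apply/eqP; lra.
have h' : (c%:R : rat) = 1 /\ (n%:R : rat) = 3 by nra.
case: h' => h1 h2.
have : c = 1%N by apply/eqP; rewrite -(eqr_nat rat) h1.
have : n = 3%N by apply/eqP; rewrite -(eqr_nat rat) h2.
lia.
Qed.


Section Main.
Variable T : finType.
Variable e : rel T.
Hypothesis e_sym : symmetric e.
Hypothesis e_irr : irreflexive e.
Variables u v : T.
Hypothesis huv : u != v.
Hypothesis hnadj : ~~ e u v.
Local Notation e' := (add_edge e u v).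
Local Notation C := (C e u v).

Lemma cv_fcv (f : rel T) w : clust_vertex f w = fcv (deg f w) (m_nbhd f w).
Proof. by []. Qed.

Definition D w := clust_vertex e' w - clust_vertex e w.

Lemma inC w : (w \in C) = e u w && e v w.
Proof. by rewrite !inE. Qed.

Lemma uC : u \notin C. Proof. by rewrite inC e_irr. Qed.
Lemma vC : v \notin C. Proof. by rewrite inC e_irr andbF. Qed.

Lemma deg_C w : w \in C -> (2 <= deg e w)%N.
Proof.
rewrite inC => /andP [h1 h2].
have : [set u; v] \subset nbhd e w.
  by apply/subsetP => z; rewrite !inE => /orP [/eqP ->|/eqP ->]; rewrite e_sym.
move/subset_leq_card; rewrite cards2 huv.
by [].
Qed.

Lemma D_w w : w != u -> w != v ->
  D w = (w \in C)%:R / ('C(deg e w, 2))%:R.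
Proof.
move=> wu wv; rewrite /D !cv_fcv /deg nb_w // -/(deg e w) (m_w e_sym e_irr hnadj) //.
case hw: (w \in C) => /=.
  rewrite /fcv (deg_C hw) natrD mulrDl; rewrite addrAC subrr add0r.
  by [].
by rewrite addn0 subrr mul0r.
Qed.

Lemma D_u : D u = fcv (deg e u).+1 (m_nbhd e u + #|C|) - fcv (deg e u) (m_nbhd e u).
Proof.
by rewrite /D !cv_fcv (deg_u huv hnadj) (m_u e_sym e_irr huv hnadj).
Qed.

Lemma D_v : D v = fcv (deg e v).+1 (m_nbhd e v + #|C|) - fcv (deg e v) (m_nbhd e v).
Proof.
by rewrite /D !cv_fcv (deg_v e_sym huv hnadj) (m_v e_sym e_irr huv hnadj).
Qed.

Lemma D_u_le : D u <= Bc #|C|.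
Proof.
rewrite D_u; apply: A1.
  by move=> h; rewrite /m_nbhd (ie_small e_irr) ?cards0.
by apply: subset_leq_card; apply: subsetIl.
Qed.

Lemma D_v_le : D v <= Bc #|C|.
Proof.
rewrite D_v; apply: A1.
  by move=> h; rewrite /m_nbhd (ie_small e_irr) ?cards0.
by apply: subset_leq_card; apply: subsetIr.
Qed.

Lemma sumD : \sum_w D w = D u + D v + \sum_(w in C) 1 / ('C(deg e w, 2))%:R.
Proof.
rewrite (bigD1 u) //= (bigD1 v) /=; last by rewrite eq_sym huv.
rewrite addrA; congr (_ + _).
rewrite big_mkcond [RHS]big_mkcond; apply: eq_bigr => w _.
case: (w =P u) => [->|/eqP wu] /=; first by rewrite (negbTE uC).
case: (w =P v) => [->|/eqP wv] /=; first by rewrite (negbTE vC).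
rewrite D_w //; case: (w \in C) => //=.
by rewrite mul0r.
Qed.

Lemma sumC_le : \sum_(w in C) 1 / ('C(deg e w, 2))%:R <= (#|C|)%:R :> rat.
Proof.
rewrite -sumr_const; apply: ler_sum => w wC.
have h : (1 <= 'C(deg e w, 2))%N by rewrite bin_gt0 deg_C.
rewrite mul1r invf_le1 ?(ler_nat _ 1) // ltr0n.
by [].
Qed.

Lemma invC_le1 w : w \in C -> 1 / ('C(deg e w, 2))%:R <= 1 :> rat.
Proof.
move=> wC; have h : (1 <= 'C(deg e w, 2))%N by rewrite bin_gt0 deg_C.
by rewrite mul1r invf_le1 ?(ler_nat _ 1) // ltr0n.
Qed.

Lemma C_sub : C \subset ~: [set u; v].
Proof.
apply/subsetP => w wC; rewrite !inE negb_or.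
apply/andP; split; apply/eqP => h; move: wC; rewrite h.
  by rewrite (negbTE uC).
by rewrite (negbTE vC).
Qed.

Lemma cardA' : #|~: [set u; v]| = (#|T| - 2)%N.
Proof. by rewrite -(cardsC [set u; v]) cards2 huv; lia. Qed.

Lemma C_le : (#|C| <= #|T| - 2)%N.
Proof. by rewrite -cardA'; apply: subset_leq_card; apply: C_sub. Qed.

Lemma total_le : \sum_w D w <= (#|C|)%:R + 2 * Bc #|C|.
Proof.
rewrite sumD; have h1 := D_u_le; have h2 := D_v_le; have h3 := sumC_le.
move: h1 h2 h3; set a := D u; set b := D v; set s := \sum_(w in C) _; set B := Bc _.
set c := (#|C|)%:R; lra.
Qed.

Lemma eq_case : (3 <= #|T|)%N -> \sum_w D w = K #|T| ->
  complete_bipartite_on e [set u; v].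
Proof.
move=> hn hsum.
have [hle heq] := A3 hn C_le.
have h1 := D_u_le; have h2 := D_v_le; have h3 := sumC_le.
have htot := hsum; rewrite sumD in htot.
have hc : #|C| = (#|T| - 2)%N.
  apply: heq; move: h1 h2 h3 hle htot.
  set a := D u; set b := D v; set s := \sum_(w in C) _; set B := Bc _.
  set c := (#|C|)%:R; set k := K _; lra.
have hs : \sum_(w in C) (1 - 1 / ('C(deg e w, 2))%:R) = 0 :> rat.
  rewrite sumrB sumr_const.
  move: h1 h2 h3 hle htot.
  set a := D u; set b := D v; set s := \sum_(w in C) _; set B := Bc _.
  set c := (#|C|)%:R; set k := K _. rewrite /c. lra.
have hdeg : forall w, w \in C -> deg e w = 2%N.
  move=> w wC.
  have := psumr_eq0P _ hs wC.
  have h0 : forall i, i \in C -> 0 <= 1 - 1 / ('C(deg e i, 2))%:R :> rat.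
    by move=> i iC; rewrite subr_ge0 invC_le1.
  move=> /(_ h0) /eqP; rewrite subr_eq0 mul1r eq_sym invr_eq1 => /eqP.
  move=> /(congr1 (fun x : rat => x)) /eqP; rewrite (eqr_nat rat _ 1) => /eqP hb.
  have := deg_C wC; case: (deg e w) hb => [|[|d]] // hb _.
  move: (bin2S d.+1); rewrite hb; nia.
have hCeq : C = ~: [set u; v].
  apply/eqP; rewrite eqEcard C_sub cardA' hc leqnn.
  by [].
have hnb : forall w, w \notin [set u; v] -> nbhd e w = [set u; v].
  move=> w hw; have wC : w \in C by rewrite hCeq inE.
  apply/esym/eqP; rewrite eqEcard.
  move: wC; rewrite inC => /andP [hu hv].
  have -> : [set u; v] \subset nbhd e w.
    by apply/subsetP => z; rewrite !inE => /orP [/eqP ->|/eqP ->]; rewrite e_sym.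
  have := hdeg w; rewrite /deg => ->; last by rewrite hCeq inE.
  by rewrite cards2 huv.
have hw : forall w y, w \notin [set u; v] -> e w y = (y \in [set u; v]).
  by move=> w y hw; rewrite -(hnb w hw) inE.
move=> x y; case hx: (x \in [set u; v]); case hy: (y \in [set u; v]) => /=.
- move: hx hy; rewrite !inE => /orP [/eqP ->|/eqP ->] /orP [/eqP ->|/eqP ->].
  + by rewrite e_irr.
  + by rewrite (negbTE hnadj).
  + by rewrite e_sym (negbTE hnadj).
  + by rewrite e_irr.
- by rewrite e_sym hw ?hy ?hx.
- by rewrite hw ?hx ?hy.
- by rewrite hw ?hx ?hy.
Qed.

Lemma bip_case : (3 <= #|T|)%N -> complete_bipartite_on e [set u; v] ->
  \sum_w D w = K #|T|.
Proof.
move=> hn hb0.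
have hb : forall x y, e x y = ((x \in [set u; v]) != (y \in [set u; v])) := hb0.
set A := [set u; v] in hb *.
have uA : u \in A by rewrite !inE eqxx.
have vA : v \in A by rewrite !inE eqxx orbT.
have hCeq : C = ~: A.
  by apply/setP => w; rewrite inC !hb uA vA in_setC; case: (w \in A).
have nbu : nbhd e u = ~: A by apply/setP => w; rewrite in_set in_setC hb uA.
have nbv : nbhd e v = ~: A by apply/setP => w; rewrite in_set in_setC hb vA.
have nbw : forall w, w \in C -> nbhd e w = A.
  move=> w; rewrite hCeq in_setC => wA; apply/setP => y; rewrite in_set hb (negbTE wA).
  by case: (y \in A).
have ie0 : induced_edges e (~: A) = set0.
  apply/setP => P; rewrite /induced_edges in_set in_set0.
  apply/negP => /andP [sub /existsP [a /existsP [b /andP [hab /eqP hP]]]].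
  have ha : a \in ~: A by apply: (subsetP sub); rewrite hP !inE eqxx.
  have hb' : b \in ~: A by apply: (subsetP sub); rewrite hP !inE eqxx orbT.
  move: ha hb' hab; rewrite !in_setC hb => /negbTE -> /negbTE ->.
  by [].
have mu0 : m_nbhd e u = 0%N by rewrite /m_nbhd nbu ie0 cards0.
have mv0 : m_nbhd e v = 0%N by rewrite /m_nbhd nbv ie0 cards0.
have cardC : #|C| = (#|T| - 2)%N by rewrite hCeq cardA'.
have du : deg e u = (#|T| - 2)%N by rewrite /deg nbu cardA'.
have dv : deg e v = (#|T| - 2)%N by rewrite /deg nbv cardA'.
rewrite sumD D_u D_v du dv cardC mu0 mv0.
have -> : \sum_(w in C) 1 / ('C(deg e w, 2))%:R = (#|C|)%:R :> rat.
  rewrite -sumr_const; apply: eq_bigr => w wC.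
  by rewrite /deg nbw // cards2 huv /= divr1.
rewrite cardC /K.
case: #|T| hn => [|[|[|k]]] // _.
rewrite (_ : (k.+3 - 2)%N = k.+1); last lia.
rewrite /fcv /= add0n mul0r if_same subr0.
have hb2 := bin2S k.+1.
have hb2r : ('C(k.+2, 2))%:R * 2 = (k.+2)%:R * (k.+1)%:R :> rat.
  by rewrite -natrM hb2 natrM.
have e1 : (k.+1%:R : rat) = k%:R + 1 by rewrite -addn1 natrD.
have e2 : (k.+2%:R : rat) = k%:R + 2 by rewrite -addn2 natrD.
have e3 : (k.+3%:R : rat) = k%:R + 3 by rewrite -addn3 natrD.
have hk : (0 : rat) <= k%:R by rewrite ler0n.
have -> : ('C(k.+2, 2))%:R = (k%:R + 2) * (k%:R + 1) / 2 :> rat.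
  by rewrite -e1 -e2 -hb2r; field.
rewrite e1 e3; field.
by apply/andP; split; apply/eqP; lra.
Qed.

End Main.

Theorem theorem4 (T : finType) (e : rel T)
  (e_sym : symmetric e) (e_irr : irreflexive e)
  (hn : (3 <= #|T|)%N) (u v : T) (huv : u != v) (hnadj : ~~ e u v) :
  let n : rat := (#|T|)%:R in
  clust (add_edge e u v) <= clust e + (1 - 2 / n + 4 / (n * (n - 1)))
  /\
  (clust (add_edge e u v) = clust e + (1 - 2 / n + 4 / (n * (n - 1)))
   <-> complete_bipartite_on e [set u; v]).
Proof.
move=> n.
have hy : (3 : rat) <= n by rewrite /n (ler_nat _ 3).
have hn0 : n != 0 by apply/eqP; lra.
have hn1 : n - 1 != 0 by apply/eqP; lra.
have hdiff : clust (add_edge e u v) = clust e + (\sum_w D e u v w) / n.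
  rewrite /clust /D sumrB -/n; field.
  by [].
have hX : 1 - 2 / n + 4 / (n * (n - 1)) = K #|T| / n.
  by rewrite /K -/n; field; rewrite hn0 hn1.
have hle : \sum_w D e u v w <= K #|T|.
  have h1 := total_le e_sym e_irr huv hnadj.
  have [h2 _] := A3 hn (C_le e_irr huv hnadj).
  exact: le_trans h1 h2.
rewrite hdiff hX; split.
  rewrite lerD2l; apply: ler_wpM2r => //.
  by rewrite invr_ge0; lra.
split => h.
  apply: (eq_case e_sym e_irr huv hnadj hn).
  move/addrI: h => /(congr1 (fun x => x * n)).
  by rewrite !divfK.
by rewrite (bip_case e_sym e_irr huv hnadj hn h).
Qed.
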